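(* Let $A$ be a $p$-Zariskian ring (not necessarily Noetherian) with Jacobson radical $\mathrm{Jac}(A)$. If $A$ has a $\delta$-structure $\delta$, then $\delta(x)\in\mathrm{Jac}(A)$ for every $x\in\mathrm{Jac}(A)^2$. In particular, no distinguished element of $A$ belongs to $\mathrm{Jac}(A)^2$. If the $\delta$-ring $A$ is local with maximal ideal $\mathfrak{m}$, then $A$ is unramified, i.e. $p\in\mathfrak{m}\setminus\mathfrak{m}^2$.
   Context: All rings are commutative $\mathbb{Z}_{(p)}$-algebras. A ring is $p$-Zariskian if $p\in\mathrm{Jac}(A)$. A $\delta$-structure is a map $\delta:A\to A$ with $\delta(0)=\delta(1)=0$, $\delta(a+b)=\delta(a)+\delta(b)+\frac{a^p+b^p-(a+b)^p}{p}$, $\delta(ab)=a^p\delta(b)+b^p\delta(a)+p\delta(a)\delta(b)$. An element $d$ is distinguished if $\delta(d)$ is a unit. *)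

(* Defs.v *)
From mathcomp Require Import all_boot all_algebra.
Set Implicit Arguments. Unset Strict Implicit. Unset Printing Implicit Defensive.
Import GRing.Theory.
Local Open Scope ring_scope.

Definition is_ideal (A : comRingType) (I : A -> Prop) : Prop :=
  [/\ I 0, (forall x y, I x -> I y -> I (x + y)) & (forall a x, I x -> I (a * x))].

Definition is_maximal_ideal (A : comRingType) (I : A -> Prop) : Prop :=
  [/\ is_ideal I, ~ I 1 &
      forall J : A -> Prop, is_ideal J -> (forall x, I x -> J x) ->
        (forall x, J x) \/ (forall x, J x <-> I x)].

Definition jacobson (A : comRingType) : A -> Prop :=
  fun x => forall M : A -> Prop, is_maximal_ideal M -> M x.

Definition ideal_sq (A : comRingType) (I : A -> Prop) : A -> Prop :=
  fun x => exists (n : nat) (a b : 'I_n -> A),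
    (forall i, I (a i) /\ I (b i)) /\ x = \sum_(i < n) a i * b i.

Definition Zp_algebra (p : nat) (A : comUnitRingType) : Prop :=
  forall n : nat, coprime n p -> (n%:R : A) \is a GRing.unit.

Definition p_zariskian (p : nat) (A : comRingType) : Prop :=
  jacobson (p%:R : A).

(* delta-structure; (a^p + b^p - (a+b)^p)/p is the integral polynomial
   - sum_{0<i<p} (C(p,i)/p) a^i b^(p-i). *)
Definition delta_structure (p : nat) (A : comRingType) (d : A -> A) : Prop :=
  [/\ d 0 = 0, d 1 = 0,
      (forall a b, d (a + b) = d a + d b
         - \sum_(1 <= i < p) ('C(p, i) %/ p)%:R * a ^+ i * b ^+ (p - i)) &
      (forall a b, d (a * b) = a ^+ p * d b + b ^+ p * d a + p%:R * d a * d b)].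

Definition distinguished (A : comUnitRingType) (d : A -> A) (x : A) : Prop :=
  d x \is a GRing.unit.

Definition local_with_max (A : comRingType) (m : A -> Prop) : Prop :=
  is_maximal_ideal m /\
  forall M : A -> Prop, is_maximal_ideal M -> forall x, M x <-> m x.

(* Main.v *)
Require Import Defs.
From mathcomp Require Import all_boot all_algebra.
From mathcomp Require Import boolp classical_sets.
From Stdlib Require Import Classical.
Import GRing.Theory.
From mathcomp Require Import zify.
Local Open Scope ring_scope.

Lemma exists_max (A : comUnitRingType) : exists M : A -> Prop, is_maximal_ideal M.
Proof.
pose P := fun X : set A => (forall x y, X x -> X y -> X (x + y)) /\
   (forall a x, X x -> X (a * x)) /\ ~ X 1.
have [|M [[PMa [PMm PM1]] Mmax]] := @Zorn_bigcup A P.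
  move=> F FP tot; split; [|split].
  - move=> x y [X FX Xx] [Y FY Yy].
    have [XY|YX] := tot X Y FX FY.
      by exists Y => //; apply: (proj1 (FP Y FY)) => //; apply: XY.
    by exists X => //; apply: (proj1 (FP X FX)) => //; apply: YX.
  - by move=> a x [X FX Xx]; exists X => //; apply: (proj1 (proj2 (FP X FX))).
  - by move=> [X FX X1]; apply: (proj2 (proj2 (FP X FX))).
have M0 : M 0.
  apply: NNPP => nM0.
  have Mempty : forall x, ~ M x by move=> x Mx; apply: nM0; rewrite -(mul0r x); exact: PMm.
  apply: (Mmax (fun x => x = 0)).
    split; first by move=> x Mx; case: (Mempty x Mx).
    by move=> /(_ 0 erefl).
  split; [by move=> x y -> ->; rewrite addr0|split; first by move=> a x ->; rewrite mulr0].
  by move=> /eqP; rewrite oner_eq0.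
exists M; split; [by split|by []|].
move=> J [J0 JD JM] MJ.
have [J1|nJ1] := pselect (J 1).
  by left => x; rewrite -(mulr1 x); exact: JM.
right => x; split; last exact: MJ.
move=> Jx; apply: NNPP => nMx; apply: (Mmax J).
  split; first exact: MJ.
  by move=> /(_ x Jx).
by split; [|split].
Qed.

Local Open Scope nat_scope.
Lemma binom_mid (p k : nat) : 0 < p ->
  (k + 1) ^ p = 1 + \sum_(1 <= i < p) 'C(p, i) * k ^ i + k ^ p.
Proof.
move=> p0; rewrite addnC expnDn -(big_mkord (fun _ => true) (fun i => 'C(p,i) * (1^(p-i) * k^i))).
rewrite big_nat_recr //= big_ltn //= bin0 binn exp1n subnn !mul1n expn0.
congr (_ + _ + _); apply: eq_big_nat => i /andP[_ ip].
by rewrite exp1n mul1n.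
Qed.

Definition NN (p n : nat) := \sum_(0 <= k < n) \sum_(1 <= i < p) ('C(p, i) %/ p) * k ^ i.

Lemma NN_eq (p n : nat) : prime p -> p * NN p n + n = n ^ p.
Proof.
move=> pp; have p0 := prime_gt0 pp.
elim: n => [|n IH]; first by rewrite /NN big_geq // muln0 exp0n.
rewrite /NN big_nat_recr //= -/(NN p n) mulnDr.
have -> : p * (\sum_(1 <= i < p) 'C(p, i) %/ p * n ^ i) = \sum_(1 <= i < p) 'C(p, i) * n ^ i.
  rewrite big_distrr /=; apply: eq_big_nat => i /andP[i1 ip].
  by rewrite mulnA [p * _]mulnC divnK // prime_dvd_bin // i1 ip.
rewrite -(addn1 n) binom_mid // -IH; lia.
Qed.

Lemma NN_p (p : nat) : prime p -> NN p p + 1 = p ^ (p.-1).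
Proof.
move=> pp; have p0 := prime_gt0 pp.
have := NN_eq p p pp.
have -> : p ^ p = p * p ^ p.-1 by rewrite -expnS prednK.
have -> : p * NN p p + p = p * (NN p p + 1) by rewrite mulnDr muln1.
by move/eqP; rewrite eqn_mul2l (negbTE (lt0n_neq0 p0)) /= => /eqP.
Qed.

Local Open Scope ring_scope.
Section Main.
Variable A : comUnitRingType.

Lemma jac0 : jacobson (0 : A).
Proof. by move=> M [[]]. Qed.
Lemma jacD (x y : A) : jacobson x -> jacobson y -> jacobson (x + y).
Proof. by move=> hx hy M hM; case: (hM) => [[_ hD _] _ _]; apply: hD; [apply: hx|apply: hy]. Qed.
Lemma jacM (a x : A) : jacobson x -> jacobson (a * x).
Proof. by move=> hx M hM; case: (hM) => [[_ _ hm] _ _]; apply: hm; apply: hx. Qed.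
Lemma jacMr (a x : A) : jacobson x -> jacobson (x * a).
Proof. by rewrite mulrC; apply: jacM. Qed.
Lemma jacN (x : A) : jacobson x -> jacobson (- x).
Proof. by move=> hx; rewrite -mulN1r; apply: jacM. Qed.
Lemma jacX (x : A) n : jacobson x -> (0 < n)%N -> jacobson (x ^+ n).
Proof. by move=> hx; case: n => // n _; rewrite exprS; apply: jacMr. Qed.
Lemma jac_sum (I : Type) (r : seq I) (P : pred I) (F : I -> A) :
  (forall i, P i -> jacobson (F i)) -> jacobson (\sum_(i <- r | P i) F i).
Proof. by move=> h; apply: big_ind => //; [apply: jac0 | apply: jacD]. Qed.

Lemma d_nat (p : nat) (d : A -> A) : delta_structure p d ->
  forall n, d n%:R = - (NN p n)%:R.
Proof.
move=> [d0 d1 dD dM]; elim => [|n IH]; first by rewrite d0 /NN big_geq // oppr0.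
rewrite -addn1 natrD dD IH d1 addr0 /NN addn1 big_nat_recr //= -/(NN p n) natrD opprD.
congr (_ - _); rewrite natr_sum; apply: eq_bigr => i _.
by rewrite expr1n mulr1 natrM natrX.
Qed.
End Main.

Lemma part1 (p : nat) (A : comUnitRingType) (d : A -> A) :
  prime p -> p_zariskian p A -> delta_structure p d ->
  forall x : A, ideal_sq (@jacobson A) x -> jacobson (d x).
Proof.
move=> pp hz [d0 d1 dD dM] x [n [a [b [hab ->]]]].
have p0 := prime_gt0 pp.
elim: n a b hab => [|n IH] a b hab; first by rewrite big_ord0 d0; apply: jac0.
rewrite big_ord_recr /= dD.
have [ha hb] := hab ord_max.
apply: jacD; first apply: jacD.
- by apply: IH => i; apply: hab.
- rewrite dM; apply: jacD; first apply: jacD.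
  + by apply: jacMr; apply: jacX.
  + by apply: jacMr; apply: jacX.
  + by apply: jacMr; apply: jacMr; apply: hz.
- apply: jacN; rewrite big_nat_cond; apply: jac_sum => i /andP[/andP[_ ip] _]; apply: jacM.
  by apply: jacX; [apply: jacM | rewrite subn_gt0].
Qed.

Theorem lemma3p3 (p : nat) (A : comUnitRingType) (d : A -> A) :
  prime p -> Zp_algebra p A -> p_zariskian p A -> delta_structure p d ->
  (forall x : A, ideal_sq (@jacobson A) x -> jacobson (d x)) /\
  (forall x : A, distinguished d x -> ~ ideal_sq (@jacobson A) x) /\
  (forall m : A -> Prop, local_with_max m -> m p%:R /\ ~ ideal_sq m p%:R).
Proof.
move=> pp _ hz hd.
have P1 := @part1 p A d pp hz hd.
split; first exact: P1.
split.
  move=> x hu hx; have hj := P1 x hx.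
  have [M hM] := exists_max A.
  have hMd := hj M hM.
  case: (hM) => [[_ _ hm] h1 _]; apply: h1.
  by rewrite -(mulVr hu); apply: hm.
move=> m [hm hloc].
have mJ : forall x, m x -> jacobson x by move=> x mx M hM; apply/(hloc M hM).
have Jm : forall x, jacobson x -> m x by move=> x jx; apply: jx.
split; first exact: Jm.
move=> [n [a [b [hab hp]]]].
have hj : jacobson (d p%:R).
  apply: P1; exists n, a, b; split=> // i; have [? ?] := hab i; split; exact: mJ.
have p1 : (0 < p.-1)%N by rewrite -ltnS prednK ?prime_gt1 ?prime_gt0.
have hj2 : jacobson ((p%:R : A) ^+ p.-1) by apply: jacX.
have : jacobson (d p%:R + (p%:R : A) ^+ p.-1) by apply: jacD.
rewrite (@d_nat A p d hd) -natrX -(NN_p p pp) natrD addrA addNr add0r => j1.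
case: hm => [_ h1 _]; apply: h1; exact: Jm.
Qed.
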